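(* There exist constants $\beta\in(0,1)$, $C>0$ and $c>0$ such that for every $m>0$, every odd $n\ge5$, every $\epsilon\in(0,1)$ with $n\epsilon\ge C$, and every $\epsilon$-differentially private mechanism $\mathcal{M}:V^n\to V$, there is some $D\in\mathcal{CTM}$ with $$\mathrm{FAIR}(D,\mathcal{M}(D))\ge c\,\frac{m}{n\epsilon}\ln\frac1\beta$$ with probability at least $\beta$.
   Context: $V=[-m/2,m/2]$. A dataset is $D=(x_1,\dots,x_n)\in V^n$ (a multiset), indexed so that $x_1\le\dots\le x_n$, with median (optimal location) $\mathcal{T}(D)=x_{\lceil n/2\rceil}$. $\mathrm{FAIR}(D,\ell)=\max_{1\le i\le n}\left(|x_i-\ell|-|x_i-\mathcal{T}(D)|\right)$. $\mathcal{CTM}$ is the set of datasets with $|x_{i+1}-x_i|\ge|x_{j+1}-x_j|$ for all $1\le i<j\le\lceil n/2\rceil-1$ and $|x_i-x_{i-1}|\ge|x_j-x_{j-1}|$ for all $\lceil n/2\rceil+1\le j<i\le n$. Two datasets are neighboring if, as multisets, they differ in exactly one element; $\mathcal{M}$ is $\epsilon$-differentially private if $\Pr[\mathcal{M}(D)\in S]\le e^{\epsilon}\Pr[\mathcal{M}(D')\in S]$ for all neighboring $D,D'$ and measurable $S\subseteq V$. *)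

(* Defs.v *)
From HB Require Import structures.
From mathcomp Require Import all_boot all_order all_algebra.
From mathcomp Require Import all_classical all_reals all_analysis.
Set Implicit Arguments. Unset Strict Implicit. Unset Printing Implicit Defensive.
Import Order.TTheory GRing.Theory Num.Theory.
Local Open Scope classical_set_scope.
Local Open Scope ring_scope.

Section Defs.
Variable R : realType.

Definition inV (m : R) (x : R) : Prop := - (m / 2) <= x <= m / 2.
Definition Vset (m : R) : set R := [set x | inV m x].

(* D is a multiset of n points of V, represented by a sequence *)
Definition dataset_in (m : R) (D : seq R) : Prop := forall x, x \in D -> inV m x.

(* x_1 <= ... <= x_n : the sorted version of D; index k (0-based) is x_{k+1} *)
Definition xs (D : seq R) : seq R := sort <=%R D.
Definition xi (D : seq R) (k : nat) : R := nth 0 (xs D) k.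

Definition medidx (n : nat) : nat := (n.+1)./2.   (* = ceil(n/2), 1-based *)
Definition median (D : seq R) : R := xi D (medidx (size D)).-1.

Definition FAIR (D : seq R) (l : R) : R :=
  let g := fun x => `|x - l| - `|x - median D| in
  match D with
  | [::] => 0
  | x :: D' => foldr (fun y a => Num.max (g y) a) (g x) D'
  end.

Definition x1 (D : seq R) (i : nat) : R := xi D i.-1.
Definition CTM (D : seq R) : Prop :=
  let n := size D in let k := medidx n in
  (forall i j : nat, (1 <= i)%N -> (i < j)%N -> (j <= k.-1)%N ->
      `|x1 D j.+1 - x1 D j| <= `|x1 D i.+1 - x1 D i|) /\
  (forall i j : nat, (k.+1 <= j)%N -> (j < i)%N -> (i <= n)%N ->
      `|x1 D j - x1 D j.-1| <= `|x1 D i - x1 D i.-1|).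

Definition neighboring (D D' : seq R) : Prop :=
  exists (x y : R) (S : seq R), x != y /\ perm_eq D (x :: S) /\ perm_eq D' (y :: S).

(* A (randomized) mechanism V^n -> V: to each dataset of n points of V,
   a probability distribution (Borel) on R, supported on V, depending only
   on the multiset D. *)
Definition mechanism (m : R) (n : nat) (M : n.-tuple R -> probability R R) : Prop :=
  (forall D : n.-tuple R, dataset_in m D -> M D (Vset m) = 1%E) /\
  (forall D D' : n.-tuple R, dataset_in m D -> dataset_in m D' ->
      perm_eq D D' -> M D = M D').

Definition eps_DP (m : R) (n : nat) (eps : R) (M : n.-tuple R -> probability R R) : Prop :=
  forall D D' : n.-tuple R, dataset_in m D -> dataset_in m D' -> neighboring D D' ->
  forall S : set R, measurable S -> S `<=` Vset m ->
    (M D S <= (expR eps)%:E * M D' S)%E.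

End Defs.

(* Main.v *)
Require Import Defs.
From HB Require Import structures.
From mathcomp Require Import all_boot all_order all_algebra.
From mathcomp Require Import all_classical all_reals all_analysis.
From mathcomp Require Import zify ring lra.
Import Order.TTheory GRing.Theory Num.Theory.
Local Open Scope classical_set_scope.
Local Open Scope ring_scope.

Lemma foldr_max_ub (R : realType) (g : R -> R) x s B :
  (forall y, y \in x :: s -> g y <= B) ->
  foldr (fun y a => Num.max (g y) a) (g x) s <= B.
Proof.
elim: s => [|y s IH] H /=; first by apply: H; rewrite mem_head.
rewrite ge_max H ?inE ?eqxx ?orbT //=; apply: IH => z.
rewrite !inE => /orP[/eqP->|zs]; apply: H; by rewrite !inE ?eqxx ?zs ?orbT.
Qed.

Lemma foldr_max_lb (R : realType) (g : R -> R) x s y :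
  y \in x :: s -> g y <= foldr (fun y a => Num.max (g y) a) (g x) s.
Proof.
elim: s y => [|z s IH] y /=; first by rewrite inE => /eqP->.
rewrite !inE le_max => /or3P[/eqP->|/eqP->|ys].
- by apply/orP; right; apply: IH; rewrite mem_head.
- by rewrite lexx.
- by apply/orP; right; apply: IH; rewrite inE ys orbT.
Qed.

Lemma FAIR_eq (R : realType) (D : seq R) l :
  median D \in D -> FAIR D l = `|l - median D|.
Proof.
case: D => [//|x s] Hmed; rewrite /FAIR.
apply/eqP; rewrite eq_le; apply/andP; split.
  apply: foldr_max_ub => y _.
  have := ler_distD (median (x :: s)) y l.
  rewrite (distrC (median _) l). lra.
have := foldr_max_lb _ (fun y => `|y - l| - `|y - median (x :: s)|) x s _ Hmed.
by rewrite subrr normr0 subr0 distrC.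
Qed.

Lemma medidx_le n : (0 < n)%N -> (medidx n <= n)%N.
Proof. move=> hn; rewrite /medidx leq_half_double -addnn; lia. Qed.

Lemma median_in (R : realType) (D : seq R) : (0 < size D)%N -> median D \in D.
Proof.
move=> hn; rewrite /median /xi -(mem_sort <=%R) /xs; apply: mem_nth.
rewrite size_sort; have := @medidx_le _ hn; rewrite /medidx. 
have : (0 < (size D).+1./2)%N by case: (size D) hn.
by move: ((size D).+1./2) => [|h].
Qed.
Set Implicit Arguments. Unset Strict Implicit.
Local Open Scope classical_set_scope.
Local Open Scope ring_scope.

Definition gg (R : realType) (m : R) (n j : nat) : R := -(m/2) + j%:R * (m / (2 * n%:R)).
Definition Eseq (R : realType) (m : R) (n a : nat) : seq R := map (gg m n) (iota a n).
Definition chain (R : realType) (m : R) (n i : nat) : seq R :=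
  map (fun j => if (j < i)%N then gg m n (n + j) else gg m n j) (iota 0 n).

Lemma s_gt0 (R : realType) (m : R) n : 0 < m -> (0 < n)%N -> 0 < m / (2 * n%:R).
Proof. move=> hm hn; apply: divr_gt0 => //; rewrite mulr_gt0 // ltr0n //. Qed.

Lemma gg_lt (R : realType) (m : R) n j j' : 0 < m -> (0 < n)%N -> (j < j')%N -> gg m n j < gg m n j'.
Proof.
move=> hm hn hj; rewrite /gg ltrD2l ltr_pM2r ?ltr_nat //; exact: s_gt0.
Qed.

Lemma gg_le (R : realType) (m : R) n j j' : 0 < m -> (0 < n)%N -> (j <= j')%N -> gg m n j <= gg m n j'.
Proof.
move=> hm hn hj; rewrite /gg lerD2l ler_pM2r ?ler_nat //; exact: s_gt0.
Qed.

Lemma gg_S (R : realType) (m : R) n j : gg m n j.+1 - gg m n j = m / (2 * n%:R).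
Proof. rewrite /gg -natr1; ring. Qed.

Lemma gg_in (R : realType) (m : R) n j : 0 < m -> (0 < n)%N -> (j <= 2 * n)%N -> inV m (gg m n j).
Proof.
move=> hm hn hj; rewrite /inV /gg; apply/andP; split.
  by rewrite lerDl mulr_ge0 // ltW // s_gt0.
have h1 : j%:R * (m / (2 * n%:R)) <= (2 * n)%:R * (m / (2 * n%:R)).
  by rewrite ler_pM2r ?ler_nat // s_gt0.
have h2 : (2 * n)%:R * (m / (2 * n%:R)) = m.
  rewrite natrM mulrC -mulrA mulVf ?mulr1 //.
  by rewrite -natrM pnatr_eq0; lia.
lra.
Qed.

Lemma Esorted (R : realType) (m : R) n a : 0 < m -> (0 < n)%N -> xs (Eseq m n a) = Eseq m n a.
Proof.
move=> hm hn; rewrite /xs sorted_sort //; first exact: le_trans.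
apply: homo_sorted; last exact: iota_sorted.
by move=> x y; apply: gg_le.
Qed.

Lemma E_nth (R : realType) (m : R) n a j : 0 < m -> (0 < n)%N -> (j < n)%N ->
  xi (Eseq m n a) j = gg m n (a + j).
Proof.
move=> hm hn hj; rewrite /xi Esorted // /Eseq (nth_map 0%N) ?size_iota //.
by rewrite nth_iota.
Qed.

Lemma E_size (R : realType) (m : R) n a : size (Eseq m n a) = n.
Proof. by rewrite size_map size_iota. Qed.

Lemma E_median (R : realType) (m : R) n a : 0 < m -> (0 < n)%N ->
  median (Eseq m n a) = gg m n (a + (medidx n).-1).
Proof.
move=> hm hn; rewrite /median E_size E_nth //.
have := @medidx_le n hn; have : (0 < medidx n)%N by rewrite /medidx; case: n hn.
by move: (medidx n) => [|h].
Qed.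

Lemma E_gap (R : realType) (m : R) n a j : 0 < m -> (0 < n)%N -> (0 < j)%N -> (j < n)%N ->
  `|x1 (Eseq m n a) j.+1 - x1 (Eseq m n a) j| = m / (2 * n%:R).
Proof.
move=> hm hn hj0 hj; rewrite /x1 /= !E_nth //; last lia.
case: j hj0 hj => [//|j] _ hj /=.
by rewrite addnS gg_S gtr0_norm // s_gt0.
Qed.

Lemma E_CTM (R : realType) (m : R) n a : 0 < m -> (0 < n)%N -> CTM (Eseq m n a).
Proof.
move=> hm hn; have hk := @medidx_le n hn; rewrite /CTM E_size; split.
  move=> i j hi hij hjk; rewrite !E_gap //; lia.
move=> i j hj hji hin.
have hk1 : (1 <= medidx n)%N by rewrite /medidx; case: (n) hn.
case: i hji hin => [//|i] hji hin; case: j hj hji => [//|j] hj hji /=.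
rewrite !E_gap //; lia.
Qed.

Lemma E_in (R : realType) (m : R) n a : 0 < m -> (0 < n)%N -> (a <= n)%N -> dataset_in m (Eseq m n a).
Proof.
move=> hm hn ha x /mapP[j]; rewrite mem_iota => /andP[_ hj] ->.
apply: gg_in => //; lia.
Qed.

Lemma chain_in (R : realType) (m : R) n i : 0 < m -> (0 < n)%N -> dataset_in m (chain m n i).
Proof.
move=> hm hn x /mapP[j]; rewrite mem_iota => /andP[_ hj] ->.
by case: ifP => _; apply: gg_in => //; lia.
Qed.

Lemma chain_size (R : realType) (m : R) n i : size (chain m n i) = n.
Proof. by rewrite size_map size_iota. Qed.

Lemma chain_nb (R : realType) (m : R) n i : 0 < m -> (0 < n)%N -> (i < n)%N ->
  neighboring (chain m n i) (chain m n i.+1).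
Proof.
move=> hm hn hi.
have Hio : iota 0 n = iota 0 i ++ i :: iota i.+1 (n - i.+1).
  by rewrite -{1}(subnKC (ltnW hi)) iotaD add0n -(subnSK hi).
set A := map (fun j => gg m n (n + j)) (iota 0 i).
set B := map (gg m n) (iota i.+1 (n - i.+1)).
have E1 : chain m n i = A ++ gg m n i :: B.
  rewrite /chain Hio map_cat /= ltnn; congr (_ ++ _ :: _).
    by apply/eq_in_map => j; rewrite mem_iota => /andP[_ ->].
  apply/eq_in_map => j; rewrite mem_iota => /andP[hj _].
  by rewrite ltnNge ltnW.
have E2 : chain m n i.+1 = A ++ gg m n (n + i) :: B.
  rewrite /chain Hio map_cat /= ltnSn; congr (_ ++ _ :: _).
    apply/eq_in_map => j; rewrite mem_iota => /andP[_ hj].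
    by rewrite (ltn_trans hj).
  apply/eq_in_map => j; rewrite mem_iota => /andP[hj _].
  by rewrite ltnNge hj.
exists (gg m n i), (gg m n (n + i)), (A ++ B); split.
  by rewrite lt_eqF // gg_lt //; lia.
rewrite E1 E2; split; apply/permPl; exact: (perm_catCA A [:: _] B).
Qed.

Lemma chain_perm (R : realType) (m : R) n k : (k <= n)%N ->
  perm_eq (chain m n k) (Eseq m n k).
Proof.
move=> hk.
have -> : chain m n k = map (gg m n) (iota n k) ++ map (gg m n) (iota k (n - k)).
  rewrite /chain.
  have -> : iota 0 n = iota 0 k ++ iota k (n - k).
    by rewrite -[in iota k _](add0n k) -iotaD subnKC.
  rewrite map_cat; congr (_ ++ _).
    have -> : iota n k = map (addn n) (iota 0 k) by rewrite -iotaDl addn0.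
    rewrite -map_comp; apply/eq_in_map => j.
    by rewrite mem_iota => /andP[_ ->].
  apply/eq_in_map => j; rewrite mem_iota => /andP[hj _].
  by rewrite ltnNge hj.
rewrite /Eseq; have -> : iota k n = iota k (n - k) ++ iota n k by rewrite -{3}(subnKC hk) -iotaD subnK.
rewrite map_cat perm_catC.
exact: perm_refl.
Qed.

Lemma chain0 (R : realType) (m : R) n : chain m n 0 = Eseq m n 0.
Proof. by apply/eq_in_map => j _. Qed.
Local Open Scope classical_set_scope.
Local Open Scope ring_scope.

Lemma expR1_le4 (R : realType) : expR (1 : R) <= 4.
Proof.
have h1 := expR_ge1Dx (- (2^-1 : R)).
have h2 : expR (2^-1 : R) * expR (- 2^-1) = 1 by rewrite -expRD subrr expR0.
have h3 : expR (2^-1 : R) <= 2.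
  have hp := expR_gt0 (2^-1 : R). nra.
have -> : (1 : R) = 2^-1 + 2^-1 by field.
rewrite expRD; have hp := expR_gt0 (2^-1 : R); nra.
Qed.

Lemma prob_real (R : realType) (P : probability R R) (A : set R) : measurable A ->
  exists r : R, P A = r%:E /\ 0 <= r <= 1.
Proof.
move=> mA; have h0 : (0 <= P A)%E by apply: measure_ge0.
have h1 := probability_le1 P mA.
case E: (P A) => [r| |]; rewrite E in h0 h1 => //.
by exists r; split => //; rewrite -!lee_fin h0 h1.
Qed.

Lemma dp_chain (R : realType) (m eps : R) n (M : n.-tuple R -> probability R R)
  (T : nat -> n.-tuple R) K :
  eps_DP m eps M -> (forall i, (i <= K)%N -> dataset_in m (T i)) ->
  (forall i, (i < K)%N -> neighboring (T i) (T i.+1)) ->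
  forall i, (i <= K)%N -> forall S, measurable S -> S `<=` Vset m ->
  (M (T 0%N) S <= (expR (i%:R * eps))%:E * M (T i) S)%E.
Proof.
move=> Hdp Hin Hnb; elim=> [|i IH] hi S mS sS.
  by rewrite mul0r expR0 mul1e.
apply: le_trans (IH (ltnW hi) S mS sS) _.
rewrite -natr1 mulrDl mul1r expRD EFinM -muleA.
apply: lee_wpmul2l; first by rewrite lee_fin ltW // expR_gt0.
apply: Hdp => //; [exact: Hin (ltnW hi) | exact: Hin | exact: Hnb].
Qed.

Lemma Vset_itv (R : realType) (m : R) : Vset m = [set` `[-(m/2), m/2]].
Proof. by apply/seteqP; split => x /=; rewrite in_itv /=. Qed.
Unset Implicit Arguments. Set Strict Implicit.
Local Open Scope classical_set_scope.
Local Open Scope ring_scope.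

Lemma gg_diff (R : realType) (m : R) n a j : gg m n (a + j) - gg m n j = a%:R * (m / (2 * n%:R)).
Proof. rewrite /gg natrD; ring. Qed.

Theorem theorem7p21 (R : realType) :
  exists (beta C c : R), 0 < beta < 1 /\ 0 < C /\ 0 < c /\
  forall (m : R) (n : nat) (eps : R), 0 < m -> odd n -> (5 <= n)%N ->
    0 < eps < 1 -> C <= n%:R * eps ->
    forall M : n.-tuple R -> probability R R,
      mechanism m M -> eps_DP m eps M ->
      exists D : n.-tuple R, dataset_in m D /\ CTM D /\
        (beta%:E <= M D [set l : R | (c * (m / (n%:R * eps)) * ln (beta^-1) <= FAIR D l)%R])%E.
Proof.
exists (5^-1), 2, (32^-1).
split; first (apply/andP; split; lra).
split; first lra. split; first lra.
move=> m n eps hm hodd h5 /andP[he0 he1] hC M [Msupp Mperm] Hdp.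
rewrite invrK.
have hn : (0 < n)%N by lia.
set k := Num.truncn eps^-1.
have hei : 0 <= eps^-1 by rewrite invr_ge0 ltW.
have hk1 : (0 < k)%N by rewrite truncn_gt0 invf_ge1 //; exact: ltW.
have hkle : k%:R <= eps^-1 by rewrite truncn_le.
have hklt : eps^-1 < k%:R + 1 by rewrite natr1 truncnS_gt.
have he0' : eps != 0 by rewrite gt_eqF.
have hke1 : k%:R * eps <= 1 by rewrite -[X in _ <= X](mulVf he0') ler_pM2r.
have hke2 : 1 < (k%:R + 1) * eps by rewrite -[X in X < _](mulVf he0') ltr_pM2r.
have hk1R : 1 <= k%:R :> R by rewrite ler1n.
have hke3 : 2^-1 <= k%:R * eps by nra.
have hkn : (k <= n)%N.
  rewrite -(ler_nat R); nra.
have sE : forall a, size (Eseq m n a) == n by move=> a; rewrite E_size.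
have sC : forall i, size (chain m n i) == n by move=> i; rewrite chain_size.
pose TE a : n.-tuple R := Tuple (sE a).
pose TC i : n.-tuple R := Tuple (sC i).
pose med a := gg m n (a + (medidx n).-1).
set t := 32^-1 * (m / (n%:R * eps)) * ln 5.
have Hdiff : med k - med 0%N = k%:R * (m / (2 * n%:R)) by rewrite /med add0n gg_diff.
have hln : ln (5 : R) <= 4.
  rewrite -ler_expR lnK ?posrE //; have := expR_ge1Dx (4 : R); lra.
have hn0 : n%:R != 0 :> R by rewrite pnatr_eq0 -lt0n.
have hs : m / (2 * n%:R) = (m / (n%:R * eps)) * eps / 2.
  by field; rewrite he0' hn0.
have hu : 0 < m / (n%:R * eps) by rewrite divr_gt0 // mulr_gt0 // ltr0n.
have ht : 2 * t <= k%:R * (m / (2 * n%:R)).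
  rewrite hs /t; move: hu; set u := m / (n%:R * eps) => hu; nra.
pose I a := [set` `]med a - t, med a + t[].
have HA : forall a, [set l | t <= FAIR (TE a) l] = ~` I a.
  move=> a; apply/seteqP; split => l /=; rewrite FAIR_eq ?median_in ?E_size //;
    rewrite /I /= E_median // in_itv /= -ltr_distl leNgt; [by move/negP | by move/negP].

  have inE0 : dataset_in m (TE 0%N) by apply: E_in.
have inEk : dataset_in m (TE k) by apply: E_in.
have [h0|h0] := leP (5^-1)%:E (M (TE 0%N) [set l | t <= FAIR (TE 0%N) l]).
  by exists (TE 0%N); split => //; split => //; apply: E_CTM.
have [h1|h1] := leP (5^-1)%:E (M (TE k) [set l | t <= FAIR (TE k) l]).
  by exists (TE k); split => //; split => //; apply: E_CTM.
exfalso.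
rewrite HA in h0; rewrite HA in h1.
have mI : forall a, measurable (I a) by move=> a; apply: measurable_itv.
have mV : measurable (Vset m) by rewrite Vset_itv; apply: measurable_itv.
pose U := I 0%N `&` Vset m.
have mU : measurable U by apply: measurableI.
have hUk : U `<=` ~` I k.
  move=> l [] /=; rewrite /I /= !in_itv /= => /andP[hl1 hl2] _ /andP[hl3 hl4].
  lra.
have Hc := @dp_chain R m eps n M TC k Hdp (fun i _ => chain_in (i:=i) hm hn)
  (fun i hi => chain_nb hm hn (leq_trans hi hkn)) k (leqnn k) U mU (@subIsetr _ _ _).
have e0 : M (TC 0%N) = M (TE 0%N).
  by apply: Mperm; [apply: chain_in | | rewrite /= chain0].
have ek : M (TC k) = M (TE k).
  by apply: Mperm; [apply: chain_in | | exact: chain_perm].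
rewrite e0 ek in Hc.
have hsub : (M (TE 0%N) (I 0%N) <= M (TE 0%N) U + M (TE 0%N) (~` Vset m))%E.
  apply: le_trans (measureU2 _ mU (measurableC mV)).
  apply: le_measure; rewrite ?inE //; first exact: measurableU mU (measurableC mV).
  by move=> l hl; case: (pselect (Vset m l)) => hv; [left | right].
have hmono : (M (TE k) U <= M (TE k) (~` I k))%E.
  by apply: le_measure; rewrite ?inE //; exact: measurableC.
rewrite probability_setC // in h0.
rewrite probability_setC // in h1.
rewrite probability_setC // Msupp // subee // in hsub.
have [a0 [Ea0 ha0]] := prob_real (M (TE 0%N)) (mI 0%N).
have [u0 [Eu0 hu0]] := prob_real (M (TE 0%N)) mU.
have [u1 [Eu1 hu1]] := prob_real (M (TE k)) mU.
have [b1 [Eb1 hb1]] := prob_real (M (TE k)) (mI k).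
rewrite Ea0 Eu0 in hsub; rewrite Ea0 -EFinB lte_fin in h0.
rewrite Eb1 -EFinB lte_fin in h1.
rewrite probability_setC // Eu1 Eb1 -EFinB lee_fin in hmono.
rewrite Eu0 Eu1 -EFinM lee_fin in Hc.
rewrite adde0 lee_fin in hsub.
have hE : expR (k%:R * eps) <= 4.
  apply: le_trans (expR1_le4 R); by rewrite ler_expR.
have hE' : expR (k%:R * eps) * u1 <= 4 * u1.
  by rewrite ler_wpM2r //; case/andP: hu1.
lra.
Qed.
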